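(* Let $n\in\mathbb{N}_{\geq 2}$, $k_n=\lceil\log_2 n\rceil$, and suppose $n\neq 3\cdot 2^{k_n-2}$. Then the GFB trees $T_{n-1}^{gfb},T_n^{gfb},T_{n+1}^{gfb}$ have a common maximal pending subtree which is fully balanced: (i) if $n\in(2^{k_n-1},3\cdot2^{k_n-2})$, this common subtree is the fully balanced tree of height $k_n-2$; (ii) if $n\in(3\cdot2^{k_n-2},2^{k_n}]$, it is the fully balanced tree of height $k_n-1$.
   Context: A rooted binary tree with $n\geq 2$ leaves is a rooted tree whose root has degree 2 and all other internal nodes have degree 3; for $n=1$ it is a single node. Trees are considered up to isomorphism. The maximal pending subtrees of a tree with at least 2 leaves are the two subtrees rooted at the children of the root. The fully balanced tree of height $k$ is the rooted binary tree with $2^k$ leaves all at depth $k$. The GFB tree $T_n^{gfb}$ is the output of: start with $n$ single-node trees; while more than one tree remains, remove a tree $u$ of minimal size (number of leaves), then remove a tree $v$ of minimal size among the remaining ones, and insert the tree with a new root whose children are the roots of $u$ and $v$; output the remaining tree. *)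

(* Defs.v *)
From Stdlib Require Import List Permutation.
From mathcomp Require Import all_boot.
Set Implicit Arguments. Unset Strict Implicit. Unset Printing Implicit Defensive.

(* Rooted binary trees (plane representation; isomorphism = swapping children). *)
Inductive tree : Type := Leaf | Node of tree & tree.

Fixpoint leaves (t : tree) : nat :=
  match t with Leaf => 1 | Node l r => leaves l + leaves r end.

Inductive tree_iso : tree -> tree -> Prop :=
| iso_leaf : tree_iso Leaf Leaf
| iso_node_straight a b c d :
    tree_iso a c -> tree_iso b d -> tree_iso (Node a b) (Node c d)
| iso_node_swap a b c d :
    tree_iso a d -> tree_iso b c -> tree_iso (Node a b) (Node c d).

Fixpoint fb (k : nat) : tree :=
  match k with 0 => Leaf | k'.+1 => Node (fb k') (fb k') end.

Definition max_pending (T S : tree) : Prop :=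
  exists l r, T = Node l r /\ (S = l \/ S = r).

(* One step of the GFB algorithm on a forest (a multiset, represented as a list
   up to permutation): remove a tree u of minimal size, then a tree v of minimal
   size among the remaining ones, insert the tree with children u and v. *)
Definition gfb_step (F F' : list tree) : Prop :=
  exists u v rest,
    Permutation F (u :: v :: rest) /\
    all (fun t => leaves u <= leaves t) (v :: rest) /\
    all (fun t => leaves v <= leaves t) rest /\
    F' = Node u v :: rest.

Inductive gfb_run : list tree -> list tree -> Prop :=
| gfb_refl F : gfb_run F F
| gfb_trans F G H : gfb_step F G -> gfb_run G H -> gfb_run F H.

(* T is a possible output of the GFB algorithm started on n single-node trees
   (ties may be broken arbitrarily). *)
Definition is_gfb (n : nat) (T : tree) : Prop := gfb_run (nseq n Leaf) [:: T].

(* Main.v *)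
Require Import Defs.
From Stdlib Require Import List Permutation.
From mathcomp Require Import all_boot zify.

Definition ispow (x : nat) : bool := 2 ^ trunc_log 2 x == x.

Lemma ispowP x : reflect (exists j, x = 2 ^ j) (ispow x).
Proof.
apply: (iffP eqP) => [<-|[j ->]]; first by eexists.
by rewrite trunc_expnK.
Qed.

Lemma pow_cases j p :
  2 * 2 ^ j <= 2 ^ p \/ 2 ^ j = 2 ^ p \/ 2 ^ j = 2 * 2 ^ p \/ 4 * 2 ^ p <= 2 ^ j.
Proof.
case: (ltngtP j p) => [h|h|->]; last by right; left.
- left; rewrite -expnS leq_exp2l //.
- have [e|h2] := eqVneq j p.+1.
    by right; right; left; rewrite e expnS.
  right; right; right.
  have : p.+2 <= j by lia.
  move=> hj; rewrite (_ : 4 * 2 ^ p = 2 ^ p.+2); last by rewrite !expnS; lia.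
  by rewrite leq_exp2l.
Qed.

Lemma leaves_gt0 t : 0 < leaves t.
Proof. elim: t => //= l IHl r IHr; lia. Qed.

Lemma tree_iso_refl t : tree_iso t t.
Proof. elim: t => [|l IHl r IHr]; [exact: iso_leaf | exact: iso_node_straight]. Qed.

Definition powfb (t : tree) := forall j, leaves t = 2 ^ j -> tree_iso t (fb j).

Definition good (t : tree) := powfb t /\
  (t = Leaf \/ exists u v, t = Node u v /\ leaves u <= leaves v /\
     leaves v <= 2 * leaves u /\ (ispow (leaves u) || ispow (leaves v)) /\
     powfb u /\ powfb v).

Definition nonpow (t : tree) : bool := ~~ ispow (leaves t).

Definition Inv (F : list tree) : Prop :=
  (forall t, List.In t F -> good t) /\
  all (fun t => all (fun t' => leaves t <= 2 * leaves t') F) F /\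
  count nonpow F <= 1.

Lemma all_perm (p : pred tree) l l' : Permutation l l' -> all p l = all p l'.
Proof.
elim => //= [x l1 l2 _ ->|x y l1|l1 l2 l3 _ -> _ ->] //.
by rewrite andbCA.
Qed.

Lemma count_perm (p : pred tree) l l' : Permutation l l' -> count p l = count p l'.
Proof. elim => //= [x l1 l2 _ ->|x y l1|l1 l2 l3 _ -> _ ->] //; lia. Qed.

Lemma sum_perm l l' : Permutation l l' -> sumn (map leaves l) = sumn (map leaves l').
Proof. elim => //= [x l1 l2 _ ->|x y l1|l1 l2 l3 _ -> _ ->] //; lia. Qed.

Lemma Inv_perm F F' : Permutation F F' -> Inv F -> Inv F'.
Proof.
move=> hp [h1 [h2 h3]]; split; [|split].
- by move=> t /(Permutation_in _ (Permutation_sym hp)) /h1.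
- rewrite -(all_perm _ _ _ hp); move: h2; apply: sub_all => t /=.
  by rewrite (all_perm _ _ _ hp).
- by rewrite -(count_perm _ _ _ hp).
Qed.

Lemma powfb_node u v : powfb u -> powfb v ->
  leaves u <= 2 * leaves v -> leaves v <= 2 * leaves u ->
  (ispow (leaves u) || ispow (leaves v)) -> powfb (Node u v).
Proof.
move=> pu pv h1 h2 hp j /= hj.
have gu := leaves_gt0 u; have gv := leaves_gt0 v.
case/orP: hp => /ispowP [x hx].
- case: (boolP (ispow (leaves v))) => [/ispowP [y hy]|hn].
  + have := pow_cases y x; have := pow_cases j x; rewrite -hx -hy -hj => hc hc'.
    have ey : leaves v = leaves u by lia.
    have exy : y = x by apply: (expnI (erefl : 1 < 2)); lia.
    subst y.
    have ej : j = x.+1 by apply: (expnI (erefl : 1 < 2)); rewrite expnS; lia.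
    subst j; apply: iso_node_straight; [exact: pu | exact: pv].
  + exfalso; have := pow_cases j x; rewrite -hx => hc.
    have : leaves v = leaves u by lia.
    by move=> e; move: hn; rewrite e; apply/negP/negPn/ispowP; exists x.
- case: (boolP (ispow (leaves u))) => [/ispowP [y hy]|hn].
  + have := pow_cases y x; have := pow_cases j x; rewrite -hx -hy -hj => hc hc'.
    have ey : leaves v = leaves u by lia.
    have exy : y = x by apply: (expnI (erefl : 1 < 2)); lia.
    subst y.
    have ej : j = x.+1 by apply: (expnI (erefl : 1 < 2)); rewrite expnS; lia.
    subst j; apply: iso_node_straight; [exact: pu | exact: pv].
  + exfalso; have := pow_cases j x; rewrite -hx => hc.
    have : leaves u = leaves v by lia.
    by move=> e; move: hn; rewrite e; apply/negP/negPn/ispowP; exists x.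
Qed.

Lemma allIn (p : pred tree) l : all p l <-> (forall t, List.In t l -> p t).
Proof.
elim: l => [|x l IH] /=; first by split.
split.
- by case/andP=> px /IH h t [<-|/h].
- move=> h; apply/andP; split; first by apply: h; left.
  by apply/IH => t ht; apply: h; right.
Qed.

Lemma Inv_step F G : Inv F -> gfb_step F G ->
  Inv G /\ sumn (map leaves G) = sumn (map leaves F).
Proof.
move=> hI [u [v [rest [hp [hu [hv ->]]]]]].
rewrite (@sum_perm _ _ hp) /=.
split; last by lia.
have [h1 [h2 h3]] := @Inv_perm _ _ hp hI.
have gu := leaves_gt0 u; have gv := leaves_gt0 v.
move/allIn: hu => hu; move/allIn: hv => hv.
have hu' : forall t, In t rest -> leaves u <= leaves t by move=> t ht; apply: hu; right.
have huv : leaves u <= leaves v by apply: hu; left.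
have hb : forall t t', In t (u :: v :: rest) -> In t' (u :: v :: rest) ->
   leaves t <= 2 * leaves t'.
  move=> t t' ht ht'; move/allIn: h2 => /(_ t ht) /allIn; exact.
have hvu : leaves v <= 2 * leaves u by apply: hb; simpl; auto.
have hbr : forall t, In t rest -> leaves t <= 2 * leaves u by move=> t ht; apply: hb; simpl; auto.
have hrr : forall t t', In t rest -> In t' rest -> leaves t <= 2 * leaves t'.
  by move=> t t' ht ht'; apply: hb; simpl; auto.
move: h3 => /= h3.
have hpw : ispow (leaves u) || ispow (leaves v).
  by move: h3; rewrite /nonpow; case: (ispow (leaves u)); case: (ispow (leaves v)).
have [pu _] : good u by apply: h1; simpl; auto.
have [pv _] : good v by apply: h1; simpl; auto.
split; [|split].
- move=> t /= [<-|ht]; last by apply: h1; simpl; auto.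
  split; first by apply: powfb_node => //; lia.
  right; exists u, v; split => //; split => //; split => //.
- apply/(proj2 (allIn _ _)) => t ht; apply/(proj2 (allIn _ _)) => t' ht'.
  case: ht => [<-|ht]; case: ht' => [<-|ht'] /=.
  + lia.
  + have := hu' t' ht'; have := hv t' ht'; lia.
  + have := hbr t ht; lia.
  + exact: hrr.
- rewrite /=.
  case: (boolP (ispow (leaves u))) => [/ispowP [x hx]|nu]; last first.
    have -> : count nonpow rest = 0 by move: h3; rewrite /nonpow nu /=; lia.
    by case: (nonpow _).
  case: (boolP (ispow (leaves v))) => [/ispowP [y hy]|nv]; last first.
    have -> : count nonpow rest = 0 by move: h3; rewrite /nonpow nv /= hx; lia.
    by case: (nonpow _).
  have := pow_cases y x; rewrite -hx -hy => hc.
  have [e|e] : leaves v = leaves u \/ leaves v = 2 * leaves u by lia.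
  + rewrite /nonpow /= e addnn -mul2n hx -expnS.
    have -> : ispow (2 ^ x.+1) by apply/ispowP; eexists.
    have hc3 : count nonpow rest <= 1 by move: h3; clear; lia.
    exact: hc3.
  + have -> : count nonpow rest = 0.
      have : forall t, In t rest -> leaves t = leaves v.
        move=> t ht; have := hv t ht; have := hbr t ht; move=> h5 h6. clear -h5 h6 e; lia.
      elim: (rest) => //= t r IH hr.
      rewrite /nonpow hr /=; last by left.
      rewrite hy; have -> : ispow (2 ^ y) by apply/ispowP; eexists.
      by rewrite /= IH // => t' ht'; apply: hr; right.
    by case: (nonpow _).
Qed.

Lemma Inv_run F G : gfb_run F G -> Inv F ->
  Inv G /\ sumn (map leaves G) = sumn (map leaves F).
Proof.
elim => [F0|F0 G0 H0 hs _ IH] hI; first by split.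
have [hI' e] := @Inv_step _ _ hI hs.
have [hI'' e'] := IH hI'; split => //; lia.
Qed.

Lemma In_nseq m t : In t (nseq m Leaf) -> t = Leaf.
Proof. by elim: m => //= m IH [<-|/IH]. Qed.

Lemma Inv_init m : Inv (nseq m Leaf).
Proof.
split; [|split].
- move=> t /In_nseq ->.
  split; last by left.
  move=> j /= h.
  have -> : j = 0 by apply: (expnI (erefl : 1 < 2)); rewrite -h.
  exact: iso_leaf.
- apply/(proj2 (allIn _ _)) => t /In_nseq -> .
  apply/(proj2 (allIn _ _)) => t' /In_nseq -> //.
- by elim: m.
Qed.

Lemma sum_nseq m : sumn (map leaves (nseq m Leaf)) = m.
Proof. by elim: m => //= m ->. Qed.

Lemma final m T : is_gfb m T -> 2 <= m ->
  exists u v, T = Node u v /\ leaves u <= leaves v /\ leaves v <= 2 * leaves u /\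
    leaves u + leaves v = m /\ (ispow (leaves u) || ispow (leaves v)) /\
    powfb u /\ powfb v.
Proof.
move=> hr hm.
have [[h1 _] e] := @Inv_run _ _ hr (Inv_init m).
rewrite sum_nseq /= addn0 in e.
move: e; have [_ [->|[u [v [-> [? [? [? [? ?]]]]]]]]] := h1 T (or_introl erefl).
  by move=> /= e; lia.
move=> e; exists u, v; do !split => //.
Qed.

Lemma pick x y j p : x = 2 ^ j -> x <= 2 * y -> y <= 2 * x ->
  3 * 2 ^ p <= 2 * (x + y) -> x + y <= 3 * 2 ^ p -> x = 2 ^ p \/ y = 2 ^ p.
Proof.
move=> hx; have := expn_gt0 2 p; have := pow_cases j p; rewrite -hx.
move: (2 ^ p) => P; lia.
Qed.

Lemma child m T p : is_gfb m T -> 2 <= m -> 3 * 2 ^ p <= 2 * m -> m <= 3 * 2 ^ p ->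
  exists P, max_pending T P /\ tree_iso P (fb p).
Proof.
move=> hr hm h1 h2.
have [u [v [-> [huv [hvu [e [hp [pu pv]]]]]]]] := @final _ _ hr hm.
case/orP: hp => /ispowP [j hj].
- have [a|a] : leaves u = 2 ^ p \/ leaves v = 2 ^ p.
    by apply: (@pick _ _ _ _ hj); lia.
  + by exists u; split; [exists u, v; split; [|left]|apply: pu].
  + by exists v; split; [exists u, v; split; [|right]|apply: pv].
- have [a|a] : leaves v = 2 ^ p \/ leaves u = 2 ^ p.
    by apply: (@pick _ _ _ _ hj); lia.
  + by exists v; split; [exists u, v; split; [|right]|apply: pv].
  + by exists u; split; [exists u, v; split; [|left]|apply: pu].
Qed.

Theorem corollary1 (n : nat) (T1 T2 T3 : tree) :
  3 <= n ->
  let k := up_log 2 n in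
  n <> 3 * 2 ^ (k - 2) ->
  is_gfb n.-1 T1 -> is_gfb n T2 -> is_gfb n.+1 T3 ->
  (2 ^ (k - 1) < n < 3 * 2 ^ (k - 2) ->
     exists S, tree_iso S (fb (k - 2)) /\
       (exists P1, max_pending T1 P1 /\ tree_iso P1 S) /\
       (exists P2, max_pending T2 P2 /\ tree_iso P2 S) /\
       (exists P3, max_pending T3 P3 /\ tree_iso P3 S)) /\
  (3 * 2 ^ (k - 2) < n <= 2 ^ k ->
     exists S, tree_iso S (fb (k - 1)) /\
       (exists P1, max_pending T1 P1 /\ tree_iso P1 S) /\
       (exists P2, max_pending T2 P2 /\ tree_iso P2 S) /\
       (exists P3, max_pending T3 P3 /\ tree_iso P3 S)).
Proof.
move=> h3 k _ r1 r2 r3.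
have e1 : 2 <= n.-1 by lia.
have e2 : 2 <= n by lia.
have e3 : 2 <= n.+1 by lia.
clearbody k; case: k => [|[|k]].
- by split => h; move: h; rewrite !sub0n expn0; lia.
- by split => h; move: h; rewrite subnn (_ : 1 - 2 = 0) // expn0; rewrite /= ?expn1; lia.
rewrite !subSS !subn0 /=.
have hP := expn_gt0 2 k.
split => h.
- exists (fb k); split; first exact: tree_iso_refl.
  split; [|split].
  + apply: (@child _ _ _ r1 e1); rewrite ?expnS in h *; lia.
  + apply: (@child _ _ _ r2 e2); rewrite ?expnS in h *; lia.
  + apply: (@child _ _ _ r3 e3); rewrite ?expnS in h *; lia.
- exists (fb k.+1); split; first exact: tree_iso_refl.
  split; [|split].
  + apply: (@child _ _ _ r1 e1); rewrite ?expnS in h *; lia.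
  + apply: (@child _ _ _ r2 e2); rewrite ?expnS in h *; lia.
  + apply: (@child _ _ _ r3 e3); rewrite ?expnS in h *; lia.
Qed.
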